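(* Let $p\ge 2$ and $d\in\{0,\dots,9\}$ be integers. The sequence $\big(P_{(d,10^n-1,p)}\big)_{n\ge p}$ converges, as $n\to\infty$, to $$\frac{1}{10}+\frac{n_{(d,p)}+m_{(d,p)}-9l_{(d,p)}-d\,k_{(d,p)}}{9\times10^{p-1}}+\frac{1}{90}\ln\Big(\frac{10^{p-1}+d}{10^{p-1}}\Big)+\frac{1}{9}\ln\Big(\frac{10^{p}}{10^{p}-10+d+1}\Big),$$ where $k_{(d,p)}=\sum_{j=10^{p-2}}^{10^{p-1}-1}\ln\frac{10j+d+1}{10j+d}$, $l_{(d,p)}=\sum_{j=10^{p-2}}^{10^{p-1}-1}j\ln\frac{10j+d+1}{10j+d}$, $m_{(d,p)}=\sum_{j=10^{p-2}}^{10^{p-1}-2}\ln\frac{10(j+1)+d}{10j+d+1}$, and $n_{(d,p)}=\sum_{j=10^{p-2}}^{10^{p-1}-2}j\ln\frac{10(j+1)+d}{10j+d+1}$.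
   Context: For an integer $x\ge 10^{p-1}$, the ''$p$-th digit of $x$'' is the $p$-th digit of its decimal expansion counted from the left. For integers $p\ge2$, $d\in\{0,\dots,9\}$ and $m\ge 10^{p-1}$, let $N_d(m)$ be the number of integers $x$ with $10^{p-1}\le x\le m$ whose $p$-th digit is $d$. For $N\ge 10^{p-1}$, $$P_{(d,N,p)}=\frac{1}{N+1-10^{p-1}}\sum_{m=10^{p-1}}^{N}\frac{N_d(m)}{m+1-10^{p-1}},$$ which is the probability that the $p$-th digit of $x$ is $d$ when $m$ is chosen uniformly in $\{10^{p-1},\dots,N\}$ and then $x$ uniformly in $\{10^{p-1},\dots,m\}$. Here $\ln$ is the natural logarithm. *)

(* Defs.v *)
From Stdlib Require Import Reals Lra Lia Arith List.
From Coquelicot Require Import Coquelicot.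
Open Scope R_scope.

(* number of decimal digits of x (with ndigits 0 = 1); fuel-based recursion *)
Fixpoint ndigits_aux (fuel x : nat) : nat :=
  match fuel with
  | O => 1
  | S f => if Nat.ltb x 10 then 1 else S (ndigits_aux f (x / 10))
  end.
Definition ndigits (x : nat) : nat := ndigits_aux x x.

(* p-th decimal digit of x counted from the left (p >= 1); meaningful when x has
   at least p digits *)
Definition pth_digit (p x : nat) : nat :=
  (x / 10 ^ (ndigits x - p)) mod 10.

Definition Ncount (d p m : nat) : nat :=
  length (filter (fun x => Nat.eqb (pth_digit p x) d)
                 (seq (10 ^ (p - 1)) (S m - 10 ^ (p - 1)))).

Definition Pdig (d N p : nat) : R :=
  / INR (S N - 10 ^ (p - 1)) *
  fold_right Rplus 0
    (map (fun m => INR (Ncount d p m) / INR (S m - 10 ^ (p - 1)))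
         (seq (10 ^ (p - 1)) (S N - 10 ^ (p - 1)))).

(* sum_{j=a}^{b} f j  (empty if b < a) *)
Definition sumR (a b : nat) (f : nat -> R) : R :=
  fold_right Rplus 0 (map f (seq a (S b - a))).

Definition kdp (d p : nat) : R :=
  sumR (10 ^ (p - 2)) (10 ^ (p - 1) - 1)
    (fun j => ln ((10 * INR j + INR d + 1) / (10 * INR j + INR d))).
Definition ldp (d p : nat) : R :=
  sumR (10 ^ (p - 2)) (10 ^ (p - 1) - 1)
    (fun j => INR j * ln ((10 * INR j + INR d + 1) / (10 * INR j + INR d))).
Definition mdp (d p : nat) : R :=
  sumR (10 ^ (p - 2)) (10 ^ (p - 1) - 2)
    (fun j => ln ((10 * (INR j + 1) + INR d) / (10 * INR j + INR d + 1))).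
Definition ndp (d p : nat) : R :=
  sumR (10 ^ (p - 2)) (10 ^ (p - 1) - 2)
    (fun j => INR j * ln ((10 * (INR j + 1) + INR d) / (10 * INR j + INR d + 1))).

(* Main.v *)
Require Import Defs.
From Stdlib Require Import Reals Lra Lia Arith List.
From Coquelicot Require Import Coquelicot.
Open Scope R_scope.

Definition sumL (lo len : nat) (f : nat -> R) : R :=
  fold_right Rplus 0 (map f (seq lo len)).

Lemma sumL_0 lo f : sumL lo 0 f = 0.
Proof. reflexivity. Qed.

Lemma sumL_S lo n f : sumL lo (S n) f = f lo + sumL (S lo) n f.
Proof. reflexivity. Qed.

Lemma sumL_app lo n1 n2 f :
  sumL lo (n1 + n2) f = sumL lo n1 f + sumL (lo + n1) n2 f.
Proof.
  revert lo; induction n1 as [|n1 IH]; intros lo.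
  - rewrite Nat.add_0_r; simpl; unfold sumL; simpl; lra.
  - simpl (S n1 + n2)%nat. rewrite !sumL_S, IH.
    replace (S lo + n1)%nat with (lo + S n1)%nat by lia. lra.
Qed.

Lemma sumL_Sr lo n f : sumL lo (S n) f = sumL lo n f + f (lo + n)%nat.
Proof.
  replace (S n) with (n + 1)%nat by lia. rewrite sumL_app.
  unfold sumL at 2; simpl; lra.
Qed.

Lemma sumL_ext lo n f g :
  (forall i, (lo <= i < lo + n)%nat -> f i = g i) -> sumL lo n f = sumL lo n g.
Proof.
  revert lo; induction n as [|n IH]; intros lo H.
  - reflexivity.
  - rewrite !sumL_S. rewrite (H lo) by lia. rewrite (IH (S lo)); [reflexivity|].
    intros i Hi; apply H; lia.
Qed.

Lemma sumL_plus lo n f g :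
  sumL lo n (fun i => f i + g i) = sumL lo n f + sumL lo n g.
Proof.
  revert lo; induction n as [|n IH]; intros lo.
  - unfold sumL; simpl; lra.
  - rewrite !sumL_S, IH. lra.
Qed.

Lemma sumL_scal lo n c f :
  sumL lo n (fun i => c * f i) = c * sumL lo n f.
Proof.
  revert lo; induction n as [|n IH]; intros lo.
  - unfold sumL; simpl; lra.
  - rewrite !sumL_S, IH. lra.
Qed.

Lemma sumL_opp lo n f :
  sumL lo n (fun i => - f i) = - sumL lo n f.
Proof.
  revert lo; induction n as [|n IH]; intros lo.
  - unfold sumL; simpl; lra.
  - rewrite !sumL_S, IH. lra.
Qed.

Lemma sumL_const lo n c : sumL lo n (fun _ => c) = INR n * c.
Proof.
  revert lo; induction n as [|n IH]; intros lo.
  - unfold sumL; simpl; lra.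
  - rewrite sumL_S, IH, S_INR. lra.
Qed.

Lemma sumL_shift lo k n f :
  sumL (lo + k) n f = sumL lo n (fun i => f (i + k)%nat).
Proof.
  revert lo; induction n as [|n IH]; intros lo.
  - reflexivity.
  - rewrite !sumL_S. replace (S (lo + k)) with (S lo + k)%nat by lia.
    rewrite IH. replace (lo + k)%nat with (lo + k)%nat by lia. reflexivity.
Qed.

Lemma sumL_tele lo n F :
  sumL lo n (fun i => F (S i) - F i) = F (lo + n)%nat - F lo.
Proof.
  revert lo; induction n as [|n IH]; intros lo.
  - rewrite Nat.add_0_r. unfold sumL; simpl; lra.
  - rewrite sumL_S, IH. replace (S lo + n)%nat with (lo + S n)%nat by lia. lra.
Qed.

Lemma sumL_le lo n f g :
  (forall i, (lo <= i < lo + n)%nat -> f i <= g i) -> sumL lo n f <= sumL lo n g.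
Proof.
  revert lo; induction n as [|n IH]; intros lo H.
  - unfold sumL; simpl; lra.
  - rewrite !sumL_S. assert (f lo <= g lo) by (apply H; lia).
    assert (sumL (S lo) n f <= sumL (S lo) n g) by (apply IH; intros; apply H; lia).
    lra.
Qed.

Lemma sumL_blocks lo n L f :
  sumL (lo * L) (n * L) f = sumL lo n (fun j => sumL (j * L) L f).
Proof.
  revert lo; induction n as [|n IH]; intros lo.
  - reflexivity.
  - rewrite sumL_S. simpl (S n * L)%nat. rewrite sumL_app.
    replace (lo * L + L)%nat with (S lo * L)%nat by (simpl; lia).
    rewrite IH. reflexivity.
Qed.

Lemma is_lim_seq_sumL lo n (u : nat -> nat -> R) (l : nat -> R) :
  (forall j, (lo <= j < lo + n)%nat -> is_lim_seq (u j) (l j)) ->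
  is_lim_seq (fun k => sumL lo n (fun j => u j k)) (sumL lo n l).
Proof.
  revert lo; induction n as [|n IH]; intros lo H.
  - apply is_lim_seq_const.
  - rewrite sumL_S.
    apply is_lim_seq_ext with (fun k => u lo k + sumL (S lo) n (fun j => u j k)).
    { intros k; rewrite sumL_S; reflexivity. }
    apply is_lim_seq_plus'. apply H; lia. apply IH. intros; apply H; lia.
Qed.

Lemma INR10 : INR 10 = 10.
Proof. simpl. lra. Qed.

Lemma INR_pow10 k : INR (10 ^ k) = 10 ^ k.
Proof. rewrite pow_INR, INR10. reflexivity. Qed.

Lemma pow10_pos k : 0 < 10 ^ k.
Proof. apply pow_lt; lra. Qed.

Lemma pow10_ge1 k : 1 <= 10 ^ k.
Proof. induction k; simpl; lra. Qed.

Lemma ln_le_sub1 y : 0 < y -> ln y <= y - 1.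
Proof.
  intros Hy. rewrite <- (ln_exp (y - 1)). apply ln_le; [lra|].
  generalize (exp_ineq1_le (y - 1)); lra.
Qed.

Lemma ln_step_bounds x : 0 < x ->
  / (x + 1) <= ln (x + 1) - ln x <= / x.
Proof.
  intros Hx. split.
  - generalize (ln_le_sub1 (x / (x + 1)) ltac:(apply Rdiv_lt_0_compat; lra)).
    rewrite ln_div by lra. intros H.
    replace (x / (x + 1) - 1) with (- / (x + 1)) in H by (field; lra). lra.
  - generalize (ln_le_sub1 ((x + 1) / x) ltac:(apply Rdiv_lt_0_compat; lra)).
    rewrite ln_div by lra. intros H.
    replace ((x + 1) / x - 1) with (/ x) in H by (field; lra). lra.
Qed.

Definition Hsum (X len : nat) : R := sumL X len (fun x => / INR x).

Lemma Hsum_bounds X len : (1 <= X)%nat ->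
  ln (INR (X + len)) - ln (INR X) <= Hsum X len <=
  ln (INR (X + len)) - ln (INR X) + / INR X.
Proof.
  intros HX. unfold Hsum. split.
  - rewrite <- (sumL_tele X len (fun i => ln (INR i))).
    apply sumL_le. intros i Hi.
    assert (0 < INR i) by (apply lt_0_INR; lia).
    rewrite S_INR. generalize (ln_step_bounds (INR i) H). lra.
  - assert (E : sumL X len (fun x => / INR x) <=
             sumL X len (fun i => (ln (INR (S i)) - ln (INR i)) +
                                  (/ INR i - / INR (S i)))).
    { apply sumL_le. intros i Hi.
      assert (0 < INR i) by (apply lt_0_INR; lia).
      rewrite S_INR. generalize (ln_step_bounds (INR i) H). lra. }
    rewrite sumL_plus in E.
    rewrite (sumL_tele X len (fun i => ln (INR i))) in E.
    replace (sumL X len (fun i => / INR i - / INR (S i))) with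
      (- sumL X len (fun i => / INR (S i) - / INR i)) in E.
    2:{ rewrite <- sumL_opp. apply sumL_ext. intros; lra. }
    rewrite (sumL_tele X len (fun i => / INR i)) in E.
    assert (0 < / INR (X + len)) by (apply Rinv_0_lt_compat, lt_0_INR; lia).
    lra.
Qed.

Lemma lim_inv_pow10 : is_lim_seq (fun k => / 10 ^ k) 0.
Proof.
  apply is_lim_seq_ext with (fun k => (/ 10) ^ k).
  { intros; apply pow_inv. }
  apply is_lim_seq_geom. rewrite Rabs_pos_eq; lra.
Qed.

Lemma ln_cont x : 0 < x -> continuity_pt ln x.
Proof.
  intros Hx. apply derivable_continuous_pt.
  exists (/ x). apply derivable_pt_lim_ln; exact Hx.
Qed.

Lemma Hlim (al de c : nat) : (c < al)%nat ->
  is_lim_seq (fun k => Hsum (al * 10 ^ k - c) (de * 10 ^ k))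
             (ln (INR (al + de) / INR al)).
Proof.
  intros Hc.
  assert (Hs : forall k, (1 <= 10 ^ k)%nat).
  { intros k. apply Nat.neq_0_lt_0, Nat.pow_nonzero. lia. }
  assert (HX : forall k, (10 ^ k <= al * 10 ^ k - c)%nat).
  { intros k. specialize (Hs k). nia. }
  assert (HXR : forall k, INR (al * 10 ^ k - c) = INR al * 10 ^ k - INR c).
  { intros k. rewrite minus_INR by (specialize (HX k); specialize (Hs k); nia).
    rewrite mult_INR, INR_pow10. reflexivity. }
  assert (HYR : forall k, INR (al * 10 ^ k - c + de * 10 ^ k) =
                          INR (al + de) * 10 ^ k - INR c).
  { intros k. rewrite plus_INR, HXR, mult_INR, INR_pow10, plus_INR. ring. }
  assert (Hal : 0 < INR al) by (apply lt_0_INR; lia).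
  assert (Hlow : is_lim_seq
     (fun k => ln (INR (al * 10 ^ k - c + de * 10 ^ k)) - ln (INR (al * 10 ^ k - c)))
     (ln (INR (al + de) / INR al))).
  { apply is_lim_seq_ext with
      (fun k => ln ((INR (al + de) - INR c * / 10 ^ k) / (INR al - INR c * / 10 ^ k))).
    { intros k. rewrite <- ln_div.
      2:{ apply lt_0_INR. specialize (HX k); specialize (Hs k); nia. }
      2:{ apply lt_0_INR. specialize (HX k); specialize (Hs k); nia. }
      f_equal. rewrite HYR, HXR. generalize (pow10_pos k); intros. field.
      split; [|lra].
      assert (INR c + 1 <= INR al).
      { rewrite <- S_INR. apply le_INR. lia. }
      assert (INR al * 1 <= INR al * 10 ^ k).
      { apply Rmult_le_compat_l; [lra|apply pow10_ge1]. }
      intros Habs.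
      assert (INR al * 10 ^ k - INR c = 10 ^ k * (INR al - INR c * / 10 ^ k)) by (field; lra).
      rewrite Habs in H2. lra. }
    apply is_lim_seq_continuous.
    { apply ln_cont. apply Rdiv_lt_0_compat; [|lra]. apply lt_0_INR; lia. }
    replace (INR (al + de) / INR al) with
      ((INR (al + de) - INR c * 0) / (INR al - INR c * 0)) by (f_equal; ring).
    apply is_lim_seq_div'.
    - apply is_lim_seq_minus'. apply is_lim_seq_const.
      apply is_lim_seq_mult'. apply is_lim_seq_const. apply lim_inv_pow10.
    - apply is_lim_seq_minus'. apply is_lim_seq_const.
      apply is_lim_seq_mult'. apply is_lim_seq_const. apply lim_inv_pow10.
    - lra. }
  apply is_lim_seq_le_le with
    (u := fun k => ln (INR (al * 10 ^ k - c + de * 10 ^ k)) - ln (INR (al * 10 ^ k - c)))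
    (w := fun k => ln (INR (al * 10 ^ k - c + de * 10 ^ k)) - ln (INR (al * 10 ^ k - c))
                   + / 10 ^ k).
  - intros k. generalize (Hsum_bounds (al * 10 ^ k - c) (de * 10 ^ k)
                            ltac:(specialize (HX k); specialize (Hs k); nia)).
    intros [H1 H2]. split; [exact H1|].
    assert (/ INR (al * 10 ^ k - c) <= / 10 ^ k).
    { rewrite <- INR_pow10. apply Rinv_le_contravar.
      apply lt_0_INR; specialize (Hs k); lia. apply le_INR, HX. }
    lra.
  - exact Hlow.
  - replace (ln (INR (al + de) / INR al)) with (ln (INR (al + de) / INR al) + 0) by ring.
    apply is_lim_seq_plus'. exact Hlow. apply lim_inv_pow10.
Qed.
Open Scope nat_scope.

Lemma ndigits_aux_spec D : forall f x, 10 ^ D <= x < 10 ^ (S D) -> D < f ->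
  ndigits_aux f x = S D.
Proof.
  induction D as [|D IH]; intros f x Hx Hf.
  - destruct f as [|f]; [lia|]. simpl in Hx. simpl.
    replace (Nat.ltb x 10) with true by (symmetry; apply Nat.ltb_lt; lia). reflexivity.
  - destruct f as [|f]; [lia|].
    change (ndigits_aux (S f) x) with (if Nat.ltb x 10 then 1 else S (ndigits_aux f (x / 10))).
    rewrite !Nat.pow_succ_r' in Hx.
    assert (H10 : 10 <= x).
    { assert (1 <= 10 ^ D) by (apply Nat.neq_0_lt_0, Nat.pow_nonzero; lia). lia. }
    replace (Nat.ltb x 10) with false by (symmetry; apply Nat.ltb_ge; lia).
    f_equal. apply IH; [|lia].
    rewrite Nat.pow_succ_r'. split.
    + apply Nat.div_le_lower_bound; lia.
    + apply Nat.div_lt_upper_bound; lia.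
Qed.

Lemma ndigits_spec D x : 10 ^ D <= x < 10 ^ (S D) -> ndigits x = S D.
Proof.
  intros Hx. unfold ndigits. apply ndigits_aux_spec; auto.
  generalize (Nat.pow_gt_lin_r 10 D ltac:(lia)). lia.
Qed.

Lemma digit_block p q k x : 1 <= p -> 10 ^ (p - 1) <= q < 10 ^ p ->
  q * 10 ^ k <= x < (q + 1) * 10 ^ k -> pth_digit p x = q mod 10.
Proof.
  intros Hp Hq Hx. unfold pth_digit.
  assert (Hs : 1 <= 10 ^ k) by (apply Nat.neq_0_lt_0, Nat.pow_nonzero; lia).
  rewrite (ndigits_spec (p - 1 + k) x).
  - replace (S (p - 1 + k) - p) with k by lia.
    f_equal. symmetry. apply (Nat.div_unique x (10 ^ k) q (x - q * 10 ^ k)); nia.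
  - rewrite Nat.pow_add_r. replace (S (p - 1 + k)) with (p + k) by lia.
    rewrite Nat.pow_add_r. split; nia.
Qed.

Lemma pow10_pred p : 1 <= p -> 10 ^ p = 10 * 10 ^ (p - 1).
Proof. intros H. destruct p as [|p]; [lia|]. rewrite Nat.pow_succ_r'. do 2 f_equal. lia. Qed.

Definition cnt (d p lo len : nat) : nat :=
  length (filter (fun x => Nat.eqb (pth_digit p x) d) (seq lo len)).

Lemma cnt_app d p lo n1 n2 : cnt d p lo (n1 + n2) = cnt d p lo n1 + cnt d p (lo + n1) n2.
Proof. unfold cnt. rewrite seq_app, filter_app, length_app. reflexivity. Qed.

Lemma cnt_const d p lo len c : (forall x, lo <= x < lo + len -> pth_digit p x = c) ->
  cnt d p lo len = if Nat.eqb c d then len else 0.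
Proof.
  revert lo; induction len as [|len IH]; intros lo H.
  - unfold cnt; simpl. destruct (Nat.eqb c d); reflexivity.
  - assert (E : cnt d p lo (S len) = (if Nat.eqb (pth_digit p lo) d then 1 else 0) + cnt d p (S lo) len).
    { unfold cnt; simpl. destruct (Nat.eqb (pth_digit p lo) d); reflexivity. }
    rewrite E, (H lo) by lia.
    rewrite IH by (intros; apply H; lia).
    destruct (Nat.eqb c d); simpl; reflexivity.
Qed.

Lemma cnt_cell d p j e k len : 2 <= p -> 10 ^ (p - 2) <= j < 10 ^ (p - 1) -> e < 10 ->
  len <= 10 ^ k ->
  cnt d p ((10 * j + e) * 10 ^ k) len = if Nat.eqb e d then len else 0.
Proof.
  intros Hp Hj He Hl. apply cnt_const. intros x Hx.
  rewrite (digit_block p (10 * j + e) k x); [| lia | | rewrite Nat.mul_add_distr_r; lia].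
  - rewrite Nat.add_comm, Nat.mul_comm, Nat.Div0.mod_add. apply Nat.mod_small; lia.
  - rewrite (pow10_pred p) by lia. 
    assert (Ha : 10 ^ (p - 1) = 10 * 10 ^ (p - 2)).
    { rewrite (pow10_pred (p - 1)) by lia. do 2 f_equal. lia. }
    rewrite Ha in *.
    lia.
Qed.

Lemma cnt_pref d p j e k : 2 <= p -> 10 ^ (p - 2) <= j < 10 ^ (p - 1) -> e <= 10 ->
  cnt d p (10 * j * 10 ^ k) (e * 10 ^ k) = if Nat.ltb d e then 10 ^ k else 0.
Proof.
  intros Hp Hj He. induction e as [|e IH].
  - simpl. destruct (Nat.ltb d 0); reflexivity.
  - replace (S e * 10 ^ k) with (e * 10 ^ k + 10 ^ k) by lia.
    rewrite cnt_app, IH by lia.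
    replace (10 * j * 10 ^ k + e * 10 ^ k) with ((10 * j + e) * 10 ^ k) by lia.
    rewrite cnt_cell by lia.
    destruct (Nat.ltb_spec d e), (Nat.eqb_spec e d), (Nat.ltb_spec d (S e)); lia.
Qed.

Lemma cnt_range d p t k : 2 <= p -> d <= 9 -> 10 ^ (p - 2) + t <= 10 ^ (p - 1) ->
  cnt d p (10 ^ (p - 2) * (10 * 10 ^ k)) (t * (10 * 10 ^ k)) = t * 10 ^ k.
Proof.
  intros Hp Hd Ht. induction t as [|t IH].
  - reflexivity.
  - replace (S t * (10 * 10 ^ k)) with (t * (10 * 10 ^ k) + 10 * 10 ^ k) by lia.
    rewrite cnt_app, IH by lia.
    replace (10 ^ (p - 2) * (10 * 10 ^ k) + t * (10 * 10 ^ k))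
      with (10 * (10 ^ (p - 2) + t) * 10 ^ k) by lia.
    rewrite (cnt_pref d p _ 10) by lia.
    replace (Nat.ltb d 10) with true by (symmetry; apply Nat.ltb_lt; lia). lia.
Qed.

Lemma pow10_p1 p : 2 <= p -> 10 ^ (p - 1) = 10 * 10 ^ (p - 2).
Proof. intros. rewrite (pow10_pred (p - 1)) by lia. do 2 f_equal. lia. Qed.

Lemma cnt_lower d p k : 2 <= p -> d <= 9 ->
  cnt d p (10 ^ (p - 1)) (10 ^ (p - 1) * 10 ^ k - 10 ^ (p - 1)) =
  10 ^ (p - 2) * 10 ^ k - 10 ^ (p - 2).
Proof.
  intros Hp Hd. rewrite (pow10_p1 p Hp).
  set (j0 := 10 ^ (p - 2)).
  assert (Hj0 : 1 <= j0) by (apply Nat.neq_0_lt_0, Nat.pow_nonzero; lia).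
  induction k as [|k IH].
  - rewrite Nat.pow_0_r, !Nat.mul_1_r, !Nat.sub_diag. reflexivity.
  - assert (Hs : 1 <= 10 ^ k) by (apply Nat.neq_0_lt_0, Nat.pow_nonzero; lia).
    rewrite Nat.pow_succ_r'.
    replace (10 * j0 * (10 * 10 ^ k) - 10 * j0) with
      ((10 * j0 * 10 ^ k - 10 * j0) + (9 * j0) * (10 * 10 ^ k)) by nia.
    rewrite cnt_app, IH.
    replace (10 * j0 + (10 * j0 * 10 ^ k - 10 * j0)) with (j0 * (10 * 10 ^ k)) by nia.
    unfold j0. rewrite cnt_range by (rewrite ?(pow10_p1 p Hp); lia). fold j0. nia.
Qed.

Lemma Ncount_formula d p j e r k : 2 <= p -> d <= 9 ->
  10 ^ (p - 2) <= j < 10 ^ (p - 1) -> e < 10 -> r < 10 ^ k ->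
  Ncount d p ((10 * j + e) * 10 ^ k + r) =
  j * 10 ^ k - 10 ^ (p - 2) + (if Nat.ltb d e then 10 ^ k else 0)
  + (if Nat.eqb e d then r + 1 else 0).
Proof.
  intros Hp Hd Hj He Hr.
  assert (Ha := pow10_p1 p Hp).
  assert (Hs : 1 <= 10 ^ k) by (apply Nat.neq_0_lt_0, Nat.pow_nonzero; lia).
  change (Ncount d p ((10 * j + e) * 10 ^ k + r)) with
    (cnt d p (10 ^ (p - 1)) (S ((10 * j + e) * 10 ^ k + r) - 10 ^ (p - 1))).
  set (j0 := 10 ^ (p - 2)) in *.
  replace (S ((10 * j + e) * 10 ^ k + r) - 10 ^ (p - 1)) with
    ((10 ^ (p - 1) * 10 ^ k - 10 ^ (p - 1)) + ((j - j0) * (10 * 10 ^ k) + (e * 10 ^ k + (r + 1))))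
    by nia.
  rewrite cnt_app. unfold j0. rewrite cnt_lower by lia. fold j0.
  rewrite cnt_app.
  replace (10 ^ (p - 1) + (10 ^ (p - 1) * 10 ^ k - 10 ^ (p - 1))) with
    (j0 * (10 * 10 ^ k)) by nia.
  unfold j0. rewrite cnt_range by lia. fold j0.
  rewrite cnt_app.
  replace (j0 * (10 * 10 ^ k) + (j - j0) * (10 * 10 ^ k)) with (10 * j * 10 ^ k) by nia.
  rewrite cnt_pref by lia.
  replace (10 * j * 10 ^ k + e * 10 ^ k) with ((10 * j + e) * 10 ^ k) by nia.
  rewrite cnt_cell by lia.
  destruct (Nat.ltb d e), (Nat.eqb e d); nia.
Qed.

Lemma Ncount_A d p j k m : 2 <= p -> d <= 9 -> 10 ^ (p - 2) <= j < 10 ^ (p - 1) ->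
  10 * j * 10 ^ k <= m < (10 * j + d) * 10 ^ k ->
  Ncount d p m = j * 10 ^ k - 10 ^ (p - 2).
Proof.
  intros Hp Hd Hj Hm.
  assert (Hs : 1 <= 10 ^ k) by (apply Nat.neq_0_lt_0, Nat.pow_nonzero; lia).
  set (s := 10 ^ k) in *.
  set (t := m - 10 * j * s).
  assert (Ht : t = s * (t / s) + t mod s) by apply Nat.div_mod_eq.
  assert (Hr : t mod s < s) by (apply Nat.mod_upper_bound; lia).
  assert (He : t / s < d) by (apply Nat.Div0.div_lt_upper_bound; unfold t; nia).
  replace m with ((10 * j + t / s) * s + t mod s) by nia.
  unfold s. rewrite Ncount_formula by (fold s; lia). fold s.
  replace (Nat.ltb d (t / s)) with false by (symmetry; apply Nat.ltb_ge; lia).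
  replace (Nat.eqb (t / s) d) with false by (symmetry; apply Nat.eqb_neq; lia).
  lia.
Qed.

Lemma Ncount_B d p j k r : 2 <= p -> d <= 9 -> 10 ^ (p - 2) <= j < 10 ^ (p - 1) ->
  r < 10 ^ k ->
  Ncount d p ((10 * j + d) * 10 ^ k + r) = j * 10 ^ k - 10 ^ (p - 2) + (r + 1).
Proof.
  intros Hp Hd Hj Hr. rewrite Ncount_formula by lia.
  replace (Nat.ltb d d) with false by (symmetry; apply Nat.ltb_ge; lia).
  rewrite Nat.eqb_refl. lia.
Qed.

Lemma Ncount_C d p j k m : 2 <= p -> d <= 9 -> 10 ^ (p - 2) <= j < 10 ^ (p - 1) ->
  (10 * j + d + 1) * 10 ^ k <= m < (10 * j + 10) * 10 ^ k ->
  Ncount d p m = j * 10 ^ k - 10 ^ (p - 2) + 10 ^ k.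
Proof.
  intros Hp Hd Hj Hm.
  assert (Hs : 1 <= 10 ^ k) by (apply Nat.neq_0_lt_0, Nat.pow_nonzero; lia).
  set (s := 10 ^ k) in *.
  set (t := m - 10 * j * s).
  assert (Ht : t = s * (t / s) + t mod s) by apply Nat.div_mod_eq.
  assert (Hr : t mod s < s) by (apply Nat.mod_upper_bound; lia).
  assert (He : t / s < 10) by (apply Nat.Div0.div_lt_upper_bound; unfold t; nia).
  assert (He2 : d + 1 <= t / s) by (apply Nat.div_le_lower_bound; unfold t; nia).
  replace m with ((10 * j + t / s) * s + t mod s) by nia.
  unfold s. rewrite Ncount_formula by (fold s; lia). fold s.
  replace (Nat.ltb d (t / s)) with true by (symmetry; apply Nat.ltb_lt; lia).
  replace (Nat.eqb (t / s) d) with false by (symmetry; apply Nat.eqb_neq; lia).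
  lia.
Qed.
Close Scope nat_scope.
Open Scope R_scope.

Definition hh (d p m : nat) : R := INR (Ncount d p m) / INR (S m - 10 ^ (p - 1)).

Lemma sum_inv_shift a lo n : (1 <= a <= lo)%nat ->
  sumL lo n (fun m => / INR (S m - a)) = Hsum (lo - (a - 1)) n.
Proof.
  intros H. unfold Hsum.
  replace lo with ((lo - (a - 1)) + (a - 1))%nat at 1 by lia.
  rewrite sumL_shift. apply sumL_ext. intros i Hi. do 2 f_equal. lia.
Qed.

Lemma sum_const_part d p lo n K : (1 <= 10 ^ (p - 1) <= lo)%nat ->
  (forall m, (lo <= m < lo + n)%nat -> Ncount d p m = K) ->
  sumL lo n (hh d p) = INR K * Hsum (lo - (10 ^ (p - 1) - 1)) n.
Proof.
  intros Ha HK. rewrite <- sum_inv_shift by lia. rewrite <- sumL_scal.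
  apply sumL_ext. intros m Hm. unfold hh. rewrite HK by lia. unfold Rdiv. reflexivity.
Qed.

Lemma block_decomp d p j k : (d <= 9)%nat ->
  sumL (j * (10 * 10 ^ k)) (10 * 10 ^ k) (hh d p) =
  sumL (10 * j * 10 ^ k) (d * 10 ^ k) (hh d p) +
  sumL ((10 * j + d) * 10 ^ k) (1 * 10 ^ k) (hh d p) +
  sumL ((10 * j + d + 1) * 10 ^ k) ((9 - d) * 10 ^ k) (hh d p).
Proof.
  intros Hd.
  replace (10 * 10 ^ k)%nat with (d * 10 ^ k + (1 * 10 ^ k + (9 - d) * 10 ^ k))%nat at 2 by nia.
  rewrite !sumL_app.
  replace (j * (10 * 10 ^ k) + d * 10 ^ k)%nat with ((10 * j + d) * 10 ^ k)%nat by nia.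
  replace ((10 * j + d) * 10 ^ k + 1 * 10 ^ k)%nat with ((10 * j + d + 1) * 10 ^ k)%nat by nia.
  replace (j * (10 * 10 ^ k))%nat with (10 * j * 10 ^ k)%nat by nia.
  ring.
Qed.

Definition Lj (d j : nat) : R :=
  INR j * ln (INR (10 * j + d) / INR (10 * j))
  + (1 - (9 * INR j + INR d) * ln (INR (10 * j + d + 1) / INR (10 * j + d)))
  + (INR j + 1) * ln (INR (10 * j + d + 1 + (9 - d)) / INR (10 * j + d + 1)).

Lemma block_lim d p j : (2 <= p)%nat -> (d <= 9)%nat ->
  (10 ^ (p - 2) <= j < 10 ^ (p - 1))%nat ->
  is_lim_seq (fun k => sumL (j * (10 * 10 ^ k)) (10 * 10 ^ k) (hh d p) / 10 ^ k) (Lj d j).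
Proof.
  intros Hp Hd Hj.
  assert (Ha := pow10_p1 p Hp).
  set (j0 := (10 ^ (p - 2))%nat) in *.
  set (a := (10 ^ (p - 1))%nat) in *.
  assert (Hj0 : (1 <= j0)%nat) by (apply Nat.neq_0_lt_0, Nat.pow_nonzero; lia).
  set (c := (a - 1)%nat).
  assert (Hs : forall k, (1 <= 10 ^ k)%nat) by (intros; apply Nat.neq_0_lt_0, Nat.pow_nonzero; lia).
  assert (E : forall k, sumL (j * (10 * 10 ^ k)) (10 * 10 ^ k) (hh d p) / 10 ^ k =
     (INR j - INR j0 * / 10 ^ k) * Hsum ((10 * j) * 10 ^ k - c) (d * 10 ^ k)
     + (1 - (9 * INR j + INR d + (INR j0 - INR a) * / 10 ^ k)
            * Hsum ((10 * j + d) * 10 ^ k - c) (1 * 10 ^ k))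
     + (INR j + 1 - INR j0 * / 10 ^ k) * Hsum ((10 * j + d + 1) * 10 ^ k - c) ((9 - d) * 10 ^ k)).
  { intros k. specialize (Hs k). rewrite block_decomp by lia.
    assert (Hk := pow10_pos k).
    rewrite (sum_const_part d p (10 * j * 10 ^ k)%nat _ (j * 10 ^ k - j0)%nat) by
      (try (fold a; nia); intros m Hm; apply Ncount_A; lia).
    rewrite (sum_const_part d p ((10 * j + d + 1) * 10 ^ k)%nat _ (j * 10 ^ k - j0 + 10 ^ k)%nat) by
      (try (fold a; nia); intros m Hm; apply Ncount_C; lia).
    assert (EB : sumL ((10 * j + d) * 10 ^ k) (1 * 10 ^ k) (hh d p) =
       INR (1 * 10 ^ k) - (INR ((10 * j + d) * 10 ^ k) - INR (j * 10 ^ k) + INR j0 - INR a)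
                          * Hsum ((10 * j + d) * 10 ^ k - c) (1 * 10 ^ k)).
    { set (K := (INR ((10 * j + d) * 10 ^ k) - INR (j * 10 ^ k) + INR j0 - INR a)).
      transitivity (sumL ((10 * j + d) * 10 ^ k) (1 * 10 ^ k)
                     (fun m => 1 + (- K) * / INR (S m - a))).
      2:{ rewrite sumL_plus, sumL_scal, sumL_const. unfold c.
          rewrite sum_inv_shift by (fold a; nia). ring. }
      apply sumL_ext. intros m Hm. unfold hh. fold a.
      replace m with ((10 * j + d) * 10 ^ k + (m - (10 * j + d) * 10 ^ k))%nat by lia.
      rewrite Ncount_B by lia. fold j0.
      replace ((10 * j + d) * 10 ^ k + (m - (10 * j + d) * 10 ^ k))%nat with m by lia.
      assert (Hpos : 0 < INR (S m - a)) by (apply lt_0_INR; nia).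
      rewrite (minus_INR (S m) a) in * by nia.
      rewrite plus_INR, (minus_INR (j * 10 ^ k) j0) by nia.
      unfold K. rewrite S_INR in *. rewrite ?plus_INR, ?mult_INR.
      rewrite (minus_INR m) by lia. rewrite ?mult_INR.
      simpl (INR 1). field. lra. }
    rewrite EB. unfold c, j0, a.
    rewrite !(minus_INR (j * 10 ^ k)) by nia. rewrite ?plus_INR, ?mult_INR, ?INR_pow10, ?plus_INR, ?mult_INR.
    rewrite ?(minus_INR (j * 10 ^ k)) by nia. rewrite ?mult_INR, ?INR_pow10, ?INR10. simpl (INR 1). field. lra. }
  eapply is_lim_seq_ext. { intros k; symmetry; apply E. }
  unfold Lj.
  assert (L0 : forall x y : R, is_lim_seq (fun k => x + y * / 10 ^ k) x).
  { intros x y.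
    pose proof (is_lim_seq_plus' _ _ x (y * 0) (is_lim_seq_const x)
      (is_lim_seq_mult' _ _ y 0 (is_lim_seq_const y) lim_inv_pow10)) as H.
    rewrite Rmult_0_r, Rplus_0_r in H. exact H. }
  assert (Hc : forall al, (a <= al)%nat -> (c < al)%nat) by (intros; unfold c; lia).
  apply is_lim_seq_plus'; [apply is_lim_seq_plus'|].
  - apply is_lim_seq_mult'.
    + apply is_lim_seq_ext with (fun k => INR j + (- INR j0) * / 10 ^ k).
      { intros; ring. } apply L0.
    + apply Hlim. apply Hc. lia.
  - apply is_lim_seq_minus'. apply is_lim_seq_const.
    apply is_lim_seq_mult'. apply L0.
    replace (INR (10 * j + d + 1)) with (INR ((10 * j + d) + 1)) by reflexivity.
    apply Hlim. apply Hc. lia.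
  - apply is_lim_seq_mult'.
    + apply is_lim_seq_ext with (fun k => (INR j + 1) + (- INR j0) * / 10 ^ k).
      { intros; ring. } apply L0.
    + apply Hlim. apply Hc. lia.
Qed.

Lemma rec_lim (x y : nat -> R) (Y : R) : (forall k, x (S k) = (x k + y k) / 10) ->
  is_lim_seq y Y -> is_lim_seq x (Y / 9).
Proof.
  intros Hrec Hy0. assert (Hy : Un_cv y Y) by (apply is_lim_seq_Reals; exact Hy0). apply is_lim_seq_Reals.
  intros eps Heps.
  destruct (Hy eps Heps) as [N HN].
  set (z := fun k => x k - Y / 9).
  assert (Hb : forall i, Rabs (z (N + i)%nat) <= Rabs (z N) * / 10 ^ i + eps / 9).
  { induction i as [|i IH].
    - rewrite Nat.add_0_r. simpl. rewrite Rinv_1. assert (0 < eps / 9) by lra.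
      lra.
    - replace (N + S i)%nat with (S (N + i)) by lia.
      unfold z at 1. rewrite Hrec.
      replace ((x (N + i)%nat + y (N + i)%nat) / 10 - Y / 9) with
        (z (N + i)%nat / 10 + (y (N + i)%nat - Y) / 10) by (unfold z; field).
      assert (Hd : Rabs (y (N + i)%nat - Y) < eps) by (apply HN; lia).
      eapply Rle_trans. apply Rabs_triang.
      unfold Rdiv. rewrite !Rabs_mult. rewrite (Rabs_pos_eq (/ 10)) by lra.
      simpl (10 ^ S i). rewrite Rinv_mult.
      assert (0 < / 10 ^ i) by (apply Rinv_0_lt_compat, pow10_pos).
      assert (Rabs (z N) * / 10 ^ i * / 10 = (Rabs (z N) * / 10 ^ i) * / 10) by ring.
      unfold R_dist in Hd. nra. }
  assert (Hc : Un_cv (fun i => Rabs (z N) * / 10 ^ i) 0).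
  { apply (proj1 (is_lim_seq_Reals _ _)).
    pose proof (is_lim_seq_scal_l _ (Rabs (z N)) 0 lim_inv_pow10) as H.
    simpl in H. rewrite Rmult_0_r in H. exact H. }
  destruct (Hc (eps / 2) ltac:(lra)) as [M HM].
  exists (N + M)%nat. intros n Hn.
  replace n with (N + (n - N))%nat by lia.
  unfold R_dist. fold (z (N + (n - N))%nat).
  specialize (Hb (n - N)%nat).
  specialize (HM (n - N)%nat ltac:(lia)). unfold R_dist in HM.
  rewrite Rminus_0_r in HM.
  assert (0 <= Rabs (z N) * / 10 ^ (n - N)).
  { apply Rmult_le_pos. apply Rabs_pos. left; apply Rinv_0_lt_compat, pow10_pos. }
  rewrite Rabs_pos_eq in HM by lra. lra.
Qed.

Lemma main_lim d p : (2 <= p)%nat -> (d <= 9)%nat ->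
  is_lim_seq (fun n => Pdig d (10 ^ (n + p) - 1) p)
    ((sumL (10 ^ (p - 2)) (10 ^ (p - 1) - 10 ^ (p - 2)) (Lj d) / 9) / INR (10 ^ (p - 1))).
Proof.
  intros Hp Hd.
  assert (Ha := pow10_p1 p Hp).
  set (j0 := (10 ^ (p - 2))%nat) in *.
  set (a := (10 ^ (p - 1))%nat) in *.
  assert (Hj0 : (1 <= j0)%nat) by (apply Nat.neq_0_lt_0, Nat.pow_nonzero; lia).
  assert (Hs : forall k, (1 <= 10 ^ k)%nat) by (intros; apply Nat.neq_0_lt_0, Nat.pow_nonzero; lia).
  set (Sk := fun k => sumL a (a * 10 ^ k - a) (hh d p)).
  set (x := fun k => Sk k / 10 ^ k).
  set (y := fun k => sumL j0 (a - j0) (fun j => sumL (j * (10 * 10 ^ k)) (10 * 10 ^ k) (hh d p) / 10 ^ k)).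
  assert (Hrec : forall k, x (S k) = (x k + y k) / 10).
  { intros k. unfold x, y, Sk. specialize (Hs k).
    replace (a * 10 ^ S k - a)%nat with ((a * 10 ^ k - a) + (a - j0) * (10 * 10 ^ k))%nat
      by (rewrite Nat.pow_succ_r'; nia).
    rewrite sumL_app.
    replace (a + (a * 10 ^ k - a))%nat with (j0 * (10 * 10 ^ k))%nat by nia.
    replace (a - j0)%nat with (a - j0)%nat by reflexivity.
    rewrite sumL_blocks.
    rewrite (sumL_ext j0 (a - j0) (fun j => sumL (j * (10 * 10 ^ k)) (10 * 10 ^ k) (hh d p) / 10 ^ k)
      (fun j => / 10 ^ k * sumL (j * (10 * 10 ^ k)) (10 * 10 ^ k) (hh d p)))
      by (intros; unfold Rdiv; ring).
    rewrite sumL_scal.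
    simpl (10 ^ S k). assert (H := pow10_pos k). field. lra. }
  assert (Hy : is_lim_seq y (sumL j0 (a - j0) (Lj d))).
  { unfold y. apply is_lim_seq_sumL. intros j Hj. apply block_lim; auto. unfold j0, a in *. lia. }
  assert (Hx := rec_lim x y _ Hrec Hy).
  apply is_lim_seq_incr_1 in Hx.
  assert (HaR : 0 < INR a) by (apply lt_0_INR; lia).
  assert (Hden : is_lim_seq (fun n => INR a - INR a * / 10 ^ S n) (INR a)).
  { pose proof (is_lim_seq_minus' _ _ (INR a) (INR a * 0) (is_lim_seq_const (INR a))
      (is_lim_seq_mult' _ _ (INR a) 0 (is_lim_seq_const _)
        (proj1 (is_lim_seq_incr_1 _ 0) lim_inv_pow10))) as H.
    rewrite Rmult_0_r, Rminus_0_r in H. exact H. }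
  pose proof (is_lim_seq_div' _ _ _ _ Hx Hden ltac:(lra)) as H.
  eapply is_lim_seq_ext; [|exact H].
  intros n. simpl. unfold x, Sk, Pdig.
  specialize (Hs (S n)).
  assert (E : (S (10 ^ (n + p) - 1) - 10 ^ (p - 1) = a * 10 ^ S n - a)%nat).
  { unfold a. rewrite <- Nat.pow_add_r. replace (p - 1 + S n)%nat with (n + p)%nat by lia.
    assert (1 <= 10 ^ (n + p))%nat by (apply Nat.neq_0_lt_0, Nat.pow_nonzero; lia). lia. }
  rewrite E. fold a.
  change (fold_right Rplus 0
     (map (fun m : nat => INR (Ncount d p m) / INR (S m - a)) (seq a (a * 10 ^ S n - a))))
    with (sumL a (a * 10 ^ S n - a) (hh d p)).
  rewrite minus_INR by nia. rewrite mult_INR, INR_pow10.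
  simpl (10 ^ S n). assert (H1 := pow10_ge1 n).
  replace (INR a - INR a * / (10 * 10 ^ n)) with (INR a * (10 * 10 ^ n - 1) / (10 * 10 ^ n))
    by (field; lra).
  replace (INR a * (10 * 10 ^ n) - INR a) with (INR a * (10 * 10 ^ n - 1)) by ring.
  assert (0 < INR a * (10 * 10 ^ n - 1)) by (apply Rmult_lt_0_compat; lra).
  field. split; lra.
Qed.


Definition UU d j := ln (10 * INR j + INR d).
Definition VV (j : nat) := ln (10 * INR j).
Definition WW d j := ln (10 * INR j + INR d + 1).

Lemma INR_ge1 j : (1 <= j)%nat -> 1 <= INR j.
Proof. intros H. apply (le_INR 1 j) in H. simpl in H. exact H. Qed.

Lemma Lj_eq d j : (1 <= j)%nat -> (d <= 9)%nat ->
  Lj d j = (1 - 9 * (INR j * (WW d j - UU d j)) - INR d * (WW d j - UU d j))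
    + (INR j * (UU d j - VV j) + (INR j + 1) * (VV (S j) - WW d j)).
Proof.
  intros Hj Hd. unfold Lj, UU, VV, WW.
  assert (H1 := INR_ge1 j Hj). assert (H2 := pos_INR d).
  replace (INR (10 * j + d + 1 + (9 - d))) with (10 * INR (S j)).
  2:{ replace (10 * j + d + 1 + (9 - d))%nat with (10 * S j)%nat by lia.
      rewrite mult_INR, INR10. reflexivity. }
  rewrite !plus_INR, !mult_INR, INR10. simpl (INR 1).
  rewrite !ln_div by (rewrite ?S_INR; lra). ring.
Qed.

Lemma sum_identity d j0 n : (1 <= j0)%nat -> (d <= 9)%nat ->
  sumL j0 (S n) (Lj d) =
  INR (S n) - 9 * sumL j0 (S n) (fun j => INR j * (WW d j - UU d j))
  - INR d * sumL j0 (S n) (fun j => WW d j - UU d j)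
  + sumL j0 n (fun j => INR j * (UU d (S j) - WW d j))
  + sumL j0 n (fun j => UU d (S j) - WW d j)
  + INR j0 * (UU d j0 - VV j0)
  + INR (j0 + S n) * (VV (j0 + S n)%nat - WW d (j0 + n)%nat).
Proof.
  intros Hj0 Hd.
  rewrite (sumL_ext _ _ _ (fun j => (1 - 9 * (INR j * (WW d j - UU d j)) - INR d * (WW d j - UU d j))
    + (INR j * (UU d j - VV j) + (INR j + 1) * (VV (S j) - WW d j))))
    by (intros; apply Lj_eq; lia).
  rewrite sumL_plus.
  assert (A : sumL j0 (S n) (fun j => 1 - 9 * (INR j * (WW d j - UU d j)) - INR d * (WW d j - UU d j))
    = INR (S n) - 9 * sumL j0 (S n) (fun j => INR j * (WW d j - UU d j))
      - INR d * sumL j0 (S n) (fun j => WW d j - UU d j)).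
  { rewrite <- !sumL_scal. rewrite <- (Rmult_1_r (INR (S n))), <- (sumL_const j0).
    unfold Rminus. rewrite <- !sumL_opp, <- !sumL_plus. apply sumL_ext. intros; ring. }
  rewrite A. rewrite sumL_plus.
  assert (C1 : sumL j0 (S n) (fun i => INR i * (UU d i - VV i)) =
    INR j0 * (UU d j0 - VV j0) + sumL j0 n (fun i => INR (i + 1) * (UU d (i + 1) - VV (i + 1)))).
  { rewrite sumL_S. replace (S j0) with (j0 + 1)%nat by lia. rewrite sumL_shift. reflexivity. }
  assert (C2 : sumL j0 (S n) (fun i => (INR i + 1) * (VV (S i) - WW d i)) =
    sumL j0 n (fun i => (INR i + 1) * (VV (S i) - WW d i))
    + (INR (j0 + n) + 1) * (VV (S (j0 + n)) - WW d (j0 + n)%nat)).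
  { rewrite sumL_Sr. reflexivity. }
  assert (B : sumL j0 n (fun i => INR (i + 1) * (UU d (i + 1) - VV (i + 1)))
             + sumL j0 n (fun j => (INR j + 1) * (VV (S j) - WW d j))
           = sumL j0 n (fun j => INR j * (UU d (S j) - WW d j))
             + sumL j0 n (fun j => UU d (S j) - WW d j)).
  { rewrite <- !sumL_plus. apply sumL_ext. intros i _.
    replace (i + 1)%nat with (S i) by lia. rewrite S_INR. ring. }
  rewrite C1, C2.
  replace (S (j0 + n)) with (j0 + S n)%nat by lia.
  replace (INR (j0 + n) + 1) with (INR (j0 + S n)) by (rewrite <- S_INR; f_equal; lia).
  lra.
Qed.

Lemma final_identity d p : (2 <= p)%nat -> (d <= 9)%nat ->
  (sumL (10 ^ (p - 2)) (10 ^ (p - 1) - 10 ^ (p - 2)) (Lj d) / 9) / INR (10 ^ (p - 1)) =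
    1 / 10
     + (ndp d p + mdp d p - 9 * ldp d p - INR d * kdp d p) / (9 * 10 ^ (p - 1))
     + 1 / 90 * ln ((10 ^ (p - 1) + INR d) / 10 ^ (p - 1))
     + 1 / 9 * ln (10 ^ p / (10 ^ p - 10 + INR d + 1)).
Proof.
  intros Hp Hd.
  assert (Hpow : 10 ^ p = 10 * 10 ^ (p - 1)).
  { replace p with (S (p - 1)) at 1 by lia. reflexivity. }
  rewrite Hpow.
  rewrite <- (INR_pow10 (p - 1)).
  unfold kdp, ldp, mdp, ndp, sumR.
  assert (Ha := pow10_p1 p Hp).
  set (j0 := (10 ^ (p - 2))%nat) in *.
  set (a := (10 ^ (p - 1))%nat) in *.
  assert (Hj0 : (1 <= j0)%nat) by (apply Nat.neq_0_lt_0, Nat.pow_nonzero; lia).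
  set (n := (a - j0 - 1)%nat).
  replace (a - j0)%nat with (S n) by (unfold n; lia).
  replace (S (a - 1) - j0)%nat with (S n) by (unfold n; lia).
  replace (S (a - 2) - j0)%nat with n by (unfold n; lia).
  rewrite sum_identity by lia.
  assert (HaR : INR a = 10 * INR j0) by (rewrite Ha, mult_INR, INR10; reflexivity).
  assert (Hj0R := INR_ge1 j0 Hj0).
  assert (HdR := pos_INR d).
  fold (sumL j0 n (fun j => INR j * ln ((10 * (INR j + 1) + INR d) / (10 * INR j + INR d + 1)))).
  fold (sumL j0 n (fun j => ln ((10 * (INR j + 1) + INR d) / (10 * INR j + INR d + 1)))).
  fold (sumL j0 (S n) (fun j => INR j * ln ((10 * INR j + INR d + 1) / (10 * INR j + INR d)))).
  fold (sumL j0 (S n) (fun j => ln ((10 * INR j + INR d + 1) / (10 * INR j + INR d)))).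
  rewrite (sumL_ext j0 (S n) (fun j => ln ((10 * INR j + INR d + 1) / (10 * INR j + INR d)))
             (fun j => WW d j - UU d j)).
  2:{ intros j Hj. assert (H1 := INR_ge1 j ltac:(lia)). unfold WW, UU.
      rewrite ln_div by lra. reflexivity. }
  rewrite (sumL_ext j0 (S n) (fun j => INR j * ln ((10 * INR j + INR d + 1) / (10 * INR j + INR d)))
             (fun j => INR j * (WW d j - UU d j))).
  2:{ intros j Hj. assert (H1 := INR_ge1 j ltac:(lia)). unfold WW, UU.
      rewrite ln_div by lra. reflexivity. }
  rewrite (sumL_ext j0 n (fun j => ln ((10 * (INR j + 1) + INR d) / (10 * INR j + INR d + 1)))
             (fun j => UU d (S j) - WW d j)).
  2:{ intros j Hj. assert (H1 := INR_ge1 j ltac:(lia)). unfold WW, UU.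
      rewrite ln_div by lra. rewrite S_INR. reflexivity. }
  rewrite (sumL_ext j0 n (fun j => INR j * ln ((10 * (INR j + 1) + INR d) / (10 * INR j + INR d + 1)))
             (fun j => INR j * (UU d (S j) - WW d j))).
  2:{ intros j Hj. assert (H1 := INR_ge1 j ltac:(lia)). unfold WW, UU.
      rewrite ln_div by lra. rewrite S_INR. reflexivity. }
  assert (E1 : INR (j0 + S n) = INR a) by (f_equal; unfold n; lia).
  assert (E2 : INR (j0 + n) = INR a - 1).
  { replace a with (S (j0 + n)) at 1 by (unfold n; lia). rewrite S_INR. ring. }
  assert (E3 : INR (S n) = 9 * INR j0).
  { replace (S n) with (a - j0)%nat by (unfold n; lia). rewrite minus_INR by lia. lra. }
  rewrite E1, E3.
  unfold VV, WW, UU. rewrite E1, E2.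
  rewrite !ln_div by lra.
  set (K := sumL j0 (S n) (fun j => WW d j - UU d j)).
  set (L := sumL j0 (S n) (fun j => INR j * (WW d j - UU d j))).
  set (M := sumL j0 n (fun j => UU d (S j) - WW d j)).
  set (N := sumL j0 n (fun j => INR j * (UU d (S j) - WW d j))).
  rewrite HaR.
  replace (10 * (10 * INR j0) - 10 + INR d + 1) with (10 * (10 * INR j0 - 1) + INR d + 1) by ring.
  field. lra.
Qed.

Theorem proposition2 (p d : nat) (hp : (2 <= p)%nat) (hd : (d <= 9)%nat) :
  is_lim_seq (fun n : nat => Pdig d (10 ^ (n + p) - 1) p)
    (1 / 10
     + (ndp d p + mdp d p - 9 * ldp d p - INR d * kdp d p) / (9 * 10 ^ (p - 1))
     + 1 / 90 * ln ((10 ^ (p - 1) + INR d) / 10 ^ (p - 1))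
     + 1 / 9 * ln (10 ^ p / (10 ^ p - 10 + INR d + 1))).
Proof.
  rewrite <- final_identity by assumption.
  apply main_lim; assumption.
Qed.
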